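(* Let $X$ be a real Banach space and let $A\subset X\times X^*$ be maximal self-cancelling (i.e. self-cancelling and not properly contained in any self-cancelling subset of $X\times X^*$). Then $A^\vdash$ or $-A^\vdash$ is maximal monotone, where $-B=\{(x,-x^* )\mid (x,x^* )\in B\}$.
   Context: $\langle x,x^*\rangle=x^*(x)$. $A$ is self-cancelling if it is a linear subspace of $X\times X^*$ with $\langle x,x^*\rangle=0$ for all $(x,x^* )\in A$. $B^\vdash=\{(y,y^* )\mid \langle x,y^*\rangle+\langle y,x^*\rangle=0\ \forall (x,x^* )\in B\}$. A set $T\subset X\times X^*$ is monotone if $\langle x-y,x^*-y^*\rangle\ge0$ for all $(x,x^* ),(y,y^* )\in T$, and maximal monotone if it is monotone and not properly contained in any monotone set. *)

(* Defs.v *)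
From HB Require Import structures.
From mathcomp Require Import all_boot all_order all_algebra.
From mathcomp Require Import all_classical all_reals all_analysis.
Set Implicit Arguments. Unset Strict Implicit. Unset Printing Implicit Defensive.
Import Order.TTheory GRing.Theory Num.Theory.
Import numFieldNormedType.Exports.
Local Open Scope classical_set_scope.
Local Open Scope ring_scope.

(* The dual X^* is represented as the continuous linear functionals X -> R;
   an element (x, x^* ) of X x X^* is a pair in X * (X -> R) whose second
   component satisfies [is_dual]. *)

Section Defs.
Variables (R : realType) (X : completeNormedModType R).

Definition is_dual (f : X -> R) : Prop :=
  (forall (a : R) (u v : X), f (a *: u + v) = a * f u + f v) /\ continuous f.

Definition pairT := (X * (X -> R))%type.

Definition in_XXs (B : set pairT) : Prop := forall p, B p -> is_dual p.2.

Definition dpair (x : X) (xs : X -> R) : R := xs x.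

Definition is_subspace (B : set pairT) : Prop :=
  in_XXs B /\ B (0, fun _ => 0) /\
  (forall p q, B p -> B q -> B (p.1 + q.1, fun z => p.2 z + q.2 z)) /\
  (forall (a : R) p, B p -> B (a *: p.1, fun z => a * p.2 z)).

Definition self_cancelling (B : set pairT) : Prop :=
  is_subspace B /\ forall p, B p -> dpair p.1 p.2 = 0.

Definition maximal_self_cancelling (B : set pairT) : Prop :=
  self_cancelling B /\
  forall C, self_cancelling C -> B `<=` C -> C = B.

Definition perp (B : set pairT) : set pairT :=
  [set q | is_dual q.2 /\
     forall p, B p -> dpair p.1 q.2 + dpair q.1 p.2 = 0].

Definition negB (B : set pairT) : set pairT :=
  [set q | exists p, B p /\ q = (p.1, fun z => - p.2 z)].

Definition monotone (T : set pairT) : Prop :=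
  in_XXs T /\
  forall p q, T p -> T q -> 0 <= dpair (p.1 - q.1) (fun z => p.2 z - q.2 z).

Definition maximal_monotone (T : set pairT) : Prop :=
  monotone T /\ forall T', monotone T' -> T `<=` T' -> T' = T.

End Defs.

(* Main.v *)
Require Import Defs.
From HB Require Import structures.
From mathcomp Require Import all_boot all_order all_algebra.
From mathcomp Require Import all_classical all_reals all_analysis.
From mathcomp Require Import ring lra.
Import Order.TTheory GRing.Theory Num.Theory.
Import numFieldNormedType.Exports.
Local Open Scope classical_set_scope.
Local Open Scope ring_scope.

Section S.
Variables (R : realType) (X : completeNormedModType R).
Implicit Types (f g : X -> R) (A : set (pairT X)) (p q b c w : pairT X) (t : R).

Lemma dual0 {f} : is_dual f -> f 0 = 0.
Proof. move=> [H _]; have := H 1 0 0; rewrite scaler0 add0r mul1r; lra. Qed.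
Lemma dualD {f u v} : is_dual f -> f (u + v) = f u + f v.
Proof. by move=> [H _]; have := H 1 u v; rewrite scale1r mul1r. Qed.
Lemma dualZ {f a u} : is_dual f -> f (a *: u) = a * f u.
Proof. move=> Hf; case: (Hf) => H _; have := H a u 0; rewrite addr0 (dual0 Hf) addr0 //. Qed.
Lemma dualB {f u v} : is_dual f -> f (u - v) = f u - f v.
Proof. move=> Hf; rewrite dualD // -scaleN1r dualZ //; ring. Qed.

Lemma dual_comb f g t : is_dual f -> is_dual g -> is_dual (fun z => f z + t * g z).
Proof.
move=> Hf Hg; split.
  move=> a u v; rewrite !dualD // !dualZ //; ring.
move=> x; apply: (@continuousD _ _ _ f (fun z => t * g z)); first by case: Hf => _ Hc; exact: Hc.
apply: (@continuousM _ _ (fun=> t) g); [exact: cst_continuous | by case: Hg => _ Hc; exact: Hc].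
Qed.
Lemma dual_scale f t : is_dual f -> is_dual (fun z => t * f z).
Proof.
move=> Hf; split.
  move=> a u v; rewrite !dualD // !dualZ //; ring.
move=> x; apply: (@continuousM _ _ (fun=> t) f); [exact: cst_continuous | by case: Hf => _ Hc; exact: Hc].
Qed.

Definition Q (p : pairT X) : R := p.2 p.1.
Definition comb (b c : pairT X) (t : R) : pairT X :=
  (b.1 + t *: c.1, fun z => b.2 z + t * c.2 z).

Lemma sc_dual {A p} : self_cancelling A -> A p -> is_dual p.2.
Proof. by case=> [[H _] _] /H. Qed.

Lemma sub_perp {A} : self_cancelling A -> A `<=` perp A.
Proof.
move=> HA q Aq; split; first exact: sc_dual HA Aq.
move=> p Ap; case: (HA) => [[_ [_ [Hadd _]]] Hsc].
have := Hsc _ (Hadd _ _ Ap Aq); rewrite /Defs.dpair /=.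
have dp := sc_dual HA Ap; have dq := sc_dual HA Aq.
rewrite (dualD dp) (dualD dq); move: (Hsc _ Ap) (Hsc _ Aq); rewrite /Defs.dpair; lra.
Qed.

Lemma comb_perp A b c t : self_cancelling A -> perp A b -> perp A c ->
  perp A (comb b c t).
Proof.
move=> HA [db Hb] [dc Hc]; split; first exact: dual_comb.
move=> p Ap; have dp := sc_dual HA Ap; rewrite /Defs.dpair /= dualD // dualZ //.
have := Hb _ Ap; have := Hc _ Ap; rewrite /Defs.dpair => h1 h2.
have -> : b.2 p.1 + t * c.2 p.1 + (p.2 b.1 + t * p.2 c.1) =
  (b.2 p.1 + p.2 b.1) + t * (c.2 p.1 + p.2 c.1) by ring.
by rewrite h1 h2; ring.
Qed.

Lemma Q_comb b c t : is_dual b.2 -> is_dual c.2 ->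
  Q (comb b c t) = Q b + t * (b.2 c.1 + c.2 b.1) + t ^+ 2 * Q c.
Proof. move=> db dc; rewrite /Q /= !dualD // !dualZ //; ring. Qed.

Lemma B_comb b c t u : is_dual b.2 -> is_dual c.2 ->
  (comb b c u).2 (comb b c t).1 + (comb b c t).2 (comb b c u).1 =
  2 * Q b + (t + u) * (b.2 c.1 + c.2 b.1) + 2 * t * u * Q c.
Proof. move=> db dc; rewrite /Q /= !dualD // !dualZ //; ring. Qed.

Lemma A_cross {A p q} : self_cancelling A -> A p -> A q -> q.2 p.1 + p.2 q.1 = 0.
Proof. by move=> HA Ap Aq; have [_ /(_ _ Ap)] := sub_perp HA q Aq; rewrite /Defs.dpair. Qed.

Lemma null_in_A A w : maximal_self_cancelling A -> perp A w -> Q w = 0 -> A w.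
Proof.
move=> [HA Hmax] [dw Hw] Qw.
pose C := fun p => exists a t, A a /\ p = comb a w t.
have [[HX [H0 [Hadd Hsc]]] Hself] := HA.
have SC : self_cancelling C.
  split; last first.
    move=> p [a [t [Aa ->]]]; have da := sc_dual HA Aa.
    rewrite /Defs.dpair /= !dualD // !dualZ //.
    have -> : a.2 a.1 + t * a.2 w.1 + t * (w.2 a.1 + t * w.2 w.1) =
      a.2 a.1 + t * (w.2 a.1 + a.2 w.1) + t ^+ 2 * w.2 w.1 by ring.
    have := Hw _ Aa; rewrite /Defs.dpair => ->.
    have := Hself _ Aa; rewrite /Defs.dpair => ->.
    move: Qw; rewrite /Q => ->; ring.
  split; [|split; [|split]].
  - move=> p [a [t [Aa ->]]]; exact: dual_comb (sc_dual HA Aa) dw.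
  - exists (0, fun _ => 0), 0; split => //; rewrite /comb /=; congr (_, _).
      by rewrite scale0r addr0.
    by apply: funext => z; ring.
  - move=> p q [a [t [Aa ->]]] [b [u [Ab ->]]].
    exists (a.1 + b.1, fun z => a.2 z + b.2 z), (t + u); split; first exact: Hadd.
    rewrite /comb /=; congr (_, _); first by rewrite scalerDl addrACA.
    by apply: funext => z; ring.
  - move=> k p [a [t [Aa ->]]].
    exists (k *: a.1, fun z => k * a.2 z), (k * t); split; first exact: Hsc.
    rewrite /comb /=; congr (_, _); first by rewrite scalerDr scalerA.
    by apply: funext => z; ring.
have AC : A `<=` C.
  move=> [a1 a2] Aa; exists (a1, a2), 0; split => //; rewrite /comb /=.
  congr (_, _); first by rewrite scale0r addr0.
  by apply: funext => z; ring.
rewrite -(Hmax C SC AC); exists (0, fun _ => 0), 1; split => //.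
move: Qw dw Hw C SC AC; case: w => w1 w2 Qw dw Hw C SC AC; rewrite /comb /=; congr (_, _).
  by rewrite scale1r add0r.
by apply: funext => z; ring.
Qed.


Lemma quad_contra (be ga k : R) : 0 < be -> ga < 0 ->
  exists t1 t2,
  [/\ be + t1 * k + t1 ^+ 2 * ga = 0, be + t2 * k + t2 ^+ 2 * ga = 0 &
      2 * be + (t1 + t2) * k + 2 * t1 * t2 * ga <> 0].
Proof.
move=> hb hg.
pose D := k ^+ 2 - 4 * ga * be.
have D0 : 0 <= D by rewrite /D; nra.
have hs := sqr_sqrtr D0.
have g0 : ga != 0 by rewrite lt_eqF.
move: hs; set s := Num.sqrt D => hs.
exists ((- k + s) / (2 * ga)), ((- k - s) / (2 * ga)).
have E : forall t, be + t * k + t ^+ 2 * ga = ((2 * ga * t + k) ^+ 2 - D) / (4 * ga).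
  by move=> t; rewrite /D; field; lra.
have e1 : 2 * ga * ((- k + s) / (2 * ga)) + k = s by field.
have e2 : 2 * ga * ((- k - s) / (2 * ga)) + k = - s by field.
split; first by rewrite E e1 hs subrr mul0r.
  by rewrite E e2 sqrrN hs subrr mul0r.
have -> : 2 * be + ((- k + s) / (2 * ga) + (- k - s) / (2 * ga)) * k +
   2 * ((- k + s) / (2 * ga)) * ((- k - s) / (2 * ga)) * ga =
   (4 * ga * be - k ^+ 2 - s ^+ 2) / (2 * ga).
  by field; lra.
rewrite hs /D.
move=> /eqP; rewrite mulf_eq0 invr_eq0 mulf_eq0 (negPf g0) orbF pnatr_eq0 orbF.
move=> /eqP; nra.
Qed.

Lemma dichotomy A : maximal_self_cancelling A ->
  (forall p, perp A p -> 0 <= Q p) \/ (forall p, perp A p -> Q p <= 0).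
Proof.
move=> HM; have HA := HM.1.
case: (pselect (forall p, perp A p -> 0 <= Q p)) => [|H1]; [by left | right].
move=> b Pb; rewrite leNgt; apply/negP => Qb.
apply: H1 => c Pc; rewrite leNgt; apply/negP => Qc.
have db := Pb.1; have dc := Pc.1.
have [t1 [t2 [h1 h2 h3]]] := @quad_contra _ _ (b.2 c.1 + c.2 b.1) Qb Qc.
have A1 : A (comb b c t1).
  apply: null_in_A => //; first exact: comb_perp.
  by rewrite Q_comb // -h1 mulrC.
have A2 : A (comb b c t2).
  apply: null_in_A => //; first exact: comb_perp.
  by rewrite Q_comb // -h2 mulrC.
apply: h3; rewrite -(A_cross HA A1 A2) B_comb //.
Qed.


Definition img A (s : R) : set (pairT X) :=
  [set q | exists p, perp A p /\ q = (p.1, fun z => s * p.2 z)].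

Lemma lin_zero (c m : R) : (forall l : R, 0 <= c - l * m) -> m = 0.
Proof.
move=> H; case: (eqVneq m 0) => // hm.
have := H ((c + 1) / m); rewrite divfK //; lra.
Qed.

Lemma mm_gen A (s : R) : self_cancelling A -> s * s = 1 ->
  (forall p, perp A p -> 0 <= s * Q p) -> maximal_monotone (img A s).
Proof.
move=> HA ss Hs.
have [[_ [_ [_ Hscal]]] Hself] := HA.
have mono : Defs.monotone (img A s).
  split.
    by move=> q [p [Pp ->]]; exact: dual_scale Pp.1.
  move=> q1 q2 [p [Pp ->]] [p' [Pp' ->]] /=.
  have := Hs _ (@comb_perp A p p' (-1) HA Pp Pp').
  rewrite /Q /comb /= scaleN1r /Defs.dpair => h.
  have -> : s * p.2 (p.1 - p'.1) - s * p'.2 (p.1 - p'.1) =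
    s * (p.2 (p.1 - p'.1) + -1 * p'.2 (p.1 - p'.1)) by ring.
  exact: h.
split => // T' [HT' MT'] sub.
apply/seteqP; split => // z Tz.
have dz := HT' _ Tz.
have Pw : perp A (z.1, fun x => s * z.2 x).
  split; first exact: dual_scale.
  move=> a Aa; have da := sc_dual HA Aa; rewrite /Defs.dpair /=.
  have m0 : z.2 a.1 + s * a.2 z.1 = 0.
    apply: (@lin_zero (z.2 z.1)) => l.
    have Aa' := Hscal l _ Aa.
    have Ti : T' (l *: a.1, fun x => s * (l * a.2 x)).
      by apply: sub; exists (l *: a.1, fun x => l * a.2 x); split => //; exact: sub_perp.
    have := MT' _ _ Tz Ti; rewrite /Defs.dpair /= !dualB // !dualZ //.
    have := Hself _ Aa; rewrite /Defs.dpair => h0.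
    have -> : z.2 z.1 - l * z.2 a.1 - s * (l * (a.2 z.1 - l * a.2 a.1)) =
      z.2 z.1 - l * (z.2 a.1 + s * a.2 z.1) + s * l ^+ 2 * a.2 a.1 by ring.
    by rewrite h0 mulr0 addr0.
  have -> : s * z.2 a.1 + a.2 z.1 = s * (z.2 a.1 + s * a.2 z.1).
    by rewrite mulrDr mulrA ss mul1r.
  by rewrite m0 mulr0.
exists (z.1, fun x => s * z.2 x); split => //=.
case: z {Tz dz Pw} => z1 z2 /=; congr (_, _).
by apply: funext => x; rewrite mulrA ss mul1r.
Qed.

End S.

Theorem lemma6 (R : realType) (X : completeNormedModType R)
  (A : set (pairT X)) :
  maximal_self_cancelling A ->
  maximal_monotone (perp A) \/ maximal_monotone (negB (perp A)).
Proof.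
move=> HM; have HA := HM.1.
case: (@dichotomy R X A HM) => H; [left | right].
- have -> : perp A = img R X A 1.
    apply/seteqP; split => q.
      move=> Pq; exists q; split => //; case: q Pq => q1 q2 _ /=; congr (_, _).
      by apply: funext => x; rewrite mul1r.
    move=> [p [Pp ->]]; case: p Pp => p1 p2 Pp /=.
    have -> : (fun z => 1 * p2 z) = p2 by apply: funext => x; rewrite mul1r.
    exact: Pp.
  apply: (@mm_gen R X A) => //; first by rewrite mul1r.
  by move=> p /H; rewrite mul1r.
- have -> : negB (perp A) = img R X A (-1).
    apply/seteqP; split => q [p [Pp ->]]; exists p; split => //; congr (_, _);
      by apply: funext => x; rewrite mulN1r.
  apply: (@mm_gen R X A) => //; first by rewrite mulN1r opprK.
  by move=> p /H; rewrite mulN1r oppr_ge0.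
Qed.
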